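(* Let $\mathbf L\in\mathbb R_+^{n\times k}$ and let $\boldsymbol\psi:\mathcal C\to\mathbb R_+^n$ be $\mathbf L$-calibrated. Then for every point $\mathbf z\in\mathcal S_\psi$ there exists $t\in[k]$ such that $\mathcal N^\psi(\mathbf z)\subseteq\mathcal Q^{\mathbf L}_t$.
   Context: Notation: $[m]=\{1,\dots,m\}$; $\Delta_n=\{\mathbf p\in\mathbb R_+^n:\sum_i p_i=1\}$. A loss matrix $\mathbf L\in\mathbb R_+^{n\times k}$ has columns $\boldsymbol\ell_t$, $t\in[k]$. Standing assumption: for each $t\in[k]$ there is $\mathbf p\in\Delta_n$ with $\operatorname{argmin}_{t'}\mathbf p^\top\boldsymbol\ell_{t'}=\{t\}$. A surrogate loss is $\boldsymbol\psi:\mathcal C\to\mathbb R_+^n$ with $\mathcal C\subseteq\mathbb R^d$ convex; $\mathcal R_\psi=\boldsymbol\psi(\mathcal C)$, $\mathcal S_\psi=\operatorname{conv}(\mathcal R_\psi)$. $\boldsymbol\psi$ is $\mathbf L$-calibrated if there is $\mathrm{pred}:\mathcal C\to[k]$ such that for all $\mathbf p\in\Delta_n$: $\inf_{\mathbf u\in\mathcal C:\mathrm{pred}(\mathbf u)\notin\operatorname{argmin}_t\mathbf p^\top\boldsymbol\ell_t}\mathbf p^\top\boldsymbol\psi(\mathbf u)>\inf_{\mathbf u\in\mathcal C}\mathbf p^\top\boldsymbol\psi(\mathbf u)$. Trigger probability set: $\mathcal Q^{\mathbf L}_t=\{\mathbf p\in\Delta_n: t\in\operatorname{argmin}_{t'\in[k]}\mathbf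 p^\top\boldsymbol\ell_{t'}\}$. Positive normal set at $\mathbf z\in\mathcal S_\psi$: $\mathcal N^\psi(\mathbf z)=\{\mathbf p\in\Delta_n:\mathbf p^\top\mathbf z=\inf_{\mathbf z'\in\mathcal S_\psi}\mathbf p^\top\mathbf z'\}$. *)

(* Defs.v *)
From Stdlib Require Import Reals Lra List.
Import ListNotations.
Open Scope R_scope.

(* Vectors in R^m are represented as functions nat -> R; only the
   coordinates 0..m-1 are meaningful. Indices of [n] and [k] are 0-based:
   the outcome i ranges over i < n, the prediction t over t < k. *)
Definition vec := nat -> R.

Definition dot (n : nat) (p z : vec) : R :=
  fold_right Rplus 0 (map (fun i => p i * z i) (seq 0 n)).

Definition simplex (n : nat) (p : vec) : Prop :=
  (forall i, (i < n)%nat -> 0 <= p i) /\ dot n (fun _ => 1) p = 1.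

(* loss matrix L in R_+^{n x k}: L i t is the entry (row i, column t);
   column t is ell_t = fun i => L i t *)
Definition col (L : nat -> nat -> R) (t : nat) : vec := fun i => L i t.

Definition loss_matrix (n k : nat) (L : nat -> nat -> R) : Prop :=
  forall i t, (i < n)%nat -> (t < k)%nat -> 0 <= L i t.

Definition in_argmin (n k : nat) (L : nat -> nat -> R) (p : vec) (t : nat) : Prop :=
  (t < k)%nat /\ forall t', (t' < k)%nat -> dot n p (col L t) <= dot n p (col L t').

Definition standing_assumption (n k : nat) (L : nat -> nat -> R) : Prop :=
  forall t, (t < k)%nat ->
    exists p, simplex n p /\ forall t', in_argmin n k L p t' <-> t' = t.

Definition in_Rd (d : nat) (u : vec) : Prop := forall j, (d <= j)%nat -> u j = 0.

Definition convex_set (d : nat) (C : vec -> Prop) : Prop :=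
  (forall u, C u -> in_Rd d u) /\
  (forall u v lam, C u -> C v -> 0 <= lam <= 1 ->
     C (fun j => lam * u j + (1 - lam) * v j)).

Definition surrogate (n : nat) (C : vec -> Prop) (psi : vec -> vec) : Prop :=
  forall u, C u -> forall i, (i < n)%nat -> 0 <= psi u i.

(* "inf_{u in A} f u > inf_{u in B} f u" in the extended reals
   (inf of the empty set = +infinity), unfolded:
   there is r with inf_A f >= r and inf_B f < r. *)
Definition inf_gt (A B : vec -> Prop) (f : vec -> R) : Prop :=
  exists r, (forall u, A u -> r <= f u) /\ (exists u, B u /\ f u < r).

Definition calibrated (n k : nat) (L : nat -> nat -> R)
    (C : vec -> Prop) (psi : vec -> vec) : Prop :=
  exists pred : vec -> nat,
    (forall u, C u -> (pred u < k)%nat) /\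
    forall p, simplex n p ->
      inf_gt (fun u => C u /\ ~ in_argmin n k L p (pred u)) C
             (fun u => dot n p (psi u)).

(* S_psi = conv(psi(C)) : finite convex combinations (coordinates < n) *)
Definition S_psi (n : nat) (C : vec -> Prop) (psi : vec -> vec) (z : vec) : Prop :=
  exists (m : nat) (lam : nat -> R) (us : nat -> vec),
    (0 < m)%nat /\
    (forall j, (j < m)%nat -> C (us j) /\ 0 <= lam j) /\
    dot m lam (fun _ => 1) = 1 /\
    forall i, (i < n)%nat ->
      z i = dot m lam (fun j => psi (us j) i).

Definition is_inf (X : R -> Prop) (x : R) : Prop :=
  (forall y, X y -> x <= y) /\ (forall b, (forall y, X y -> b <= y) -> b <= x).

Definition normal_set (n : nat) (C : vec -> Prop) (psi : vec -> vec) (z p : vec) : Prop :=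
  simplex n p /\
  is_inf (fun x => exists z', S_psi n C psi z' /\ x = dot n p z') (dot n p z).

Definition trigger (n k : nat) (L : nat -> nat -> R) (t : nat) (p : vec) : Prop :=
  simplex n p /\ in_argmin n k L p t.

(* Main.v *)
Require Import Defs.
From Stdlib Require Import Reals.
From Stdlib Require Import Lra Lia List Classical.
Import ListNotations.
Open Scope R_scope.

Definition Sm (l : list nat) (f : nat -> R) : R := fold_right Rplus 0 (map f l).

Lemma Sm_ext l f g : (forall x, In x l -> f x = g x) -> Sm l f = Sm l g.
Proof. induction l; simpl; intros H; auto. unfold Sm in *; simpl.
rewrite H by auto. rewrite IHl; auto. Qed.

Lemma Sm_plus l f g : Sm l (fun x => f x + g x) = Sm l f + Sm l g.
Proof. induction l; unfold Sm in *; simpl; [lra|]. rewrite IHl; lra. Qed.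

Lemma Sm_scal l c f : c * Sm l f = Sm l (fun x => c * f x).
Proof. induction l; unfold Sm in *; simpl; [lra|]. rewrite <- IHl; lra. Qed.

Lemma Sm_zero l : Sm l (fun _ => 0) = 0.
Proof. induction l; unfold Sm in *; simpl; lra. Qed.

Lemma Sm_swap l1 l2 F :
  Sm l1 (fun i => Sm l2 (fun j => F i j)) = Sm l2 (fun j => Sm l1 (fun i => F i j)).
Proof. induction l1; simpl.
- unfold Sm at 1; simpl. rewrite <- (Sm_zero l2). apply Sm_ext. reflexivity.
- unfold Sm at 1; simpl. fold (Sm l1 (fun i => Sm l2 (fun j => F i j))).
  rewrite IHl1. rewrite <- Sm_plus. apply Sm_ext. intros; reflexivity. Qed.

Lemma Sm_le l f g : (forall x, In x l -> f x <= g x) -> Sm l f <= Sm l g.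
Proof. induction l; unfold Sm in *; simpl; intros H; [lra|].
assert (H1 := H a (or_introl eq_refl)).
assert (IH := IHl (fun x Hx => H x (or_intror Hx))). lra. Qed.

Lemma Sm_nonneg l f : (forall y, In y l -> 0 <= f y) -> 0 <= Sm l f.
Proof. intros H. rewrite <- (Sm_zero l). apply Sm_le. auto. Qed.

Lemma Sm_term l f x : In x l -> (forall y, In y l -> 0 <= f y) -> f x <= Sm l f.
Proof. induction l; intros Hx H; [contradiction|].
assert (H1 := H a (or_introl eq_refl)).
assert (H2 : 0 <= Sm l f) by (apply Sm_nonneg; intros; apply H; right; auto).
unfold Sm; simpl; fold (Sm l f).
destruct Hx as [<-|Hx]; [lra|].
assert (IH := IHl Hx (fun y Hy => H y (or_intror Hy))). lra. Qed.

Theorem mainTheorem3 (n k d : nat) (L : nat -> nat -> R)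
  (C : vec -> Prop) (psi : vec -> vec)
  (hL : loss_matrix n k L) (hstand : standing_assumption n k L)
  (hC : convex_set d C) (hpsi : surrogate n C psi)
  (hcal : calibrated n k L C psi) :
  forall z, S_psi n C psi z ->
    exists t, (t < k)%nat /\
      forall p, normal_set n C psi z p -> trigger n k L t p.
Proof.
  intros z [m [lam [us [Hm [Hus [Hsum Hz]]]]]].
  destruct hcal as [pred [Hpred Hcal]].
  assert (Hj0 : exists j, (j < m)%nat /\ 0 < lam j).
  { destruct (classic (exists j, (j < m)%nat /\ 0 < lam j)) as [H|H]; auto.
    exfalso. assert (Sm (seq 0 m) (fun j => lam j * 1) <= Sm (seq 0 m) (fun _ => 0)).
    { apply Sm_le. intros x Hx. apply in_seq in Hx.
      destruct (Rle_dec (lam x) 0). lra. exfalso; apply H; exists x; split; [lia|lra]. }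
    rewrite Sm_zero in H0. unfold dot in Hsum. change (Sm (seq 0 m) (fun j => lam j * 1) = 1) in Hsum. lra. }
  destruct Hj0 as [j0 [Hj0m Hj0pos]].
  exists (pred (us j0)). split. { apply Hpred. apply Hus; auto. }
  intros p [Hp [Hinf1 Hinf2]]. split; auto.
  destruct (classic (in_argmin n k L p (pred (us j0)))) as [Ha|Ha]; auto. exfalso.
  destruct (Hcal p Hp) as [r [Hr [u0 [Cu0 Hu0]]]].
  assert (Hsing : forall u, C u -> dot n p z <= dot n p (psi u)).
  { intros u Cu. apply Hinf1. exists (psi u). split; auto.
    exists 1%nat, (fun _ => 1), (fun _ => u). split; [lia|]. split.
    { intros j _; split; auto; lra. }
    split. { unfold dot; simpl; lra. }
    intros i _. unfold dot; simpl; lra. }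
  assert (Hr0 : r <= dot n p (psi (us j0))). { apply Hr. split; auto. apply Hus; auto. }
  assert (Hu0' := Hsing u0 Cu0).
  assert (Hdecomp : dot n p z = Sm (seq 0 m) (fun j => lam j * dot n p (psi (us j)))).
  { change (Sm (seq 0 n) (fun i => p i * z i) = Sm (seq 0 m) (fun j => lam j * Sm (seq 0 n) (fun i => p i * psi (us j) i))).
    transitivity (Sm (seq 0 n) (fun i => Sm (seq 0 m) (fun j => p i * (lam j * psi (us j) i)))).
    { apply Sm_ext. intros i Hi. apply in_seq in Hi. rewrite Hz by lia.
      apply Sm_scal. }
    rewrite Sm_swap. apply Sm_ext. intros j _. rewrite Sm_scal. apply Sm_ext. intros; lra. }
  assert (Hsum' : Sm (seq 0 m) (fun j => lam j * 1) = 1) by exact Hsum.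
  set (c := dot n p z) in *.
  assert (Hdiff : Sm (seq 0 m) (fun j => lam j * dot n p (psi (us j))) - c =
                  Sm (seq 0 m) (fun j => lam j * (dot n p (psi (us j)) - c))).
  { transitivity (Sm (seq 0 m) (fun j => lam j * dot n p (psi (us j))) + (-c) * Sm (seq 0 m) (fun j => lam j * 1)).
    { rewrite Hsum'; lra. }
    rewrite Sm_scal, <- Sm_plus. apply Sm_ext. intros; lra. }
  assert (Hterm : lam j0 * (dot n p (psi (us j0)) - c) <=
                  Sm (seq 0 m) (fun j => lam j * (dot n p (psi (us j)) - c))).
  { apply (Sm_term (seq 0 m) (fun j => lam j * (dot n p (psi (us j)) - c))).
    apply in_seq; lia. intros y Hy. apply in_seq in Hy.
    destruct (Hus y ltac:(lia)) as [Cy Ly]. assert (Hs := Hsing _ Cy).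
    apply Rmult_le_pos; lra. }
  assert (0 < lam j0 * (dot n p (psi (us j0)) - c)) by (apply Rmult_lt_0_compat; lra).
  lra.
Qed.
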